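(* Let $(\sigma,f)$ and $(\tau,g)$ be generalized equivariant maps from $K\ltimes Y$ to $G\ltimes X$, namely $K\ltimes Y\xleftarrow{\sigma}K'\ltimes Y'\xrightarrow{f}G\ltimes X$ and $K\ltimes Y\xleftarrow{\tau}K''\ltimes Y''\xrightarrow{g}G\ltimes X$. If $(\sigma,f)\Rightarrow(\tau,g)$, then $(\sigma,f)$ and $(\tau,g)$ are homotopic.
   Context: Translation groupoids $G\ltimes X$ have objects $X$, arrows $G\times X$, and arrows $(g,x):x\to gx$; all groups are discrete and act properly. $X^I$ is the space of continuous paths $[0,1]\to X$ with the compact-open topology and pointwise $G$-action. For $i\in\{0,1\}$, $\mathrm{ev}_i:G\ltimes X^I\to G\ltimes X$ is the equivariant map $(g,\alpha)\mapsto(g,\alpha(i))$. A natural transformation $\phi\sim\psi$ between strict morphisms is a continuous $T:K_0\to G_1$ with $T(x):\phi(x)\to\psi(x)$ natural in arrows. An essential equivalence is a strict morphism $\epsilon:\mathcal K\to\mathcal G$ satisfying two conditions. (i) The map $G_1\times^t_{G_0}K_0\to G_0$, $(g,k)\mapsto s(g)$, is an open surjection. (ii) $K_1$ is the pullback of $(s,t):G_1\to G_0\times G_0$ along $\epsilon\times\epsilon$. A generalized equivariant map $\mathcal K\xleftarrow{\epsilon}\mathcal J\xrightarrow{\phi}\mathcal G$ is a span of equivariant maps of translation groupoids with $\epsilon$ an essential equivalence. Two such, $(\epsilon,\phi)$ and $(\epsilon',\phi')$, are $2$-isomorphic, written $(\epsilon,\phi)\Rightarrow(\epsilon',\phi')$,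 if there are a translation groupoid $\mathcal L$ and equivariant essential equivalences $u:\mathcal L\to\mathcal J$, $v:\mathcal L\to\mathcal J'$ with $\epsilon u\sim\epsilon'v$ and $\phi u\sim\phi'v$. Homotopy: generalized maps $(\sigma,f)$ and $(\tau,g)$ from $K\ltimes Y$ to $G\ltimes X$ are homotopic if there is a generalized equivariant map $K\ltimes Y\xleftarrow{\epsilon}\tilde K\ltimes\tilde Y\xrightarrow{H}G\ltimes X^I$ with $(\sigma,f)\Rightarrow(\epsilon,\mathrm{ev}_0\circ H)$ and $(\tau,g)\Rightarrow(\epsilon,\mathrm{ev}_1\circ H)$. *)

(* Defs.v *)
From Stdlib Require Import Reals List FunctionalExtensionality PropExtensionality.
Set Implicit Arguments.
Unset Strict Implicit.

Record space := Space {
  pt :> Type;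
  is_open : (pt -> Prop) -> Prop;
  open_full : is_open (fun _ => True);
  open_inter : forall A B, is_open A -> is_open B -> is_open (fun x => A x /\ B x);
  open_union : forall F : (pt -> Prop) -> Prop,
      (forall A, F A -> is_open A) -> is_open (fun x => exists A, F A /\ A x) }.
Arguments is_open {s} _.

Definition continuous (A B : space) (f : A -> B) : Prop :=
  forall U : B -> Prop, is_open U -> is_open (fun x => U (f x)).

Definition open_map (A B : space) (f : A -> B) : Prop :=
  forall U : A -> Prop, is_open U -> is_open (fun b => exists a, U a /\ f a = b).

Definition surjective (A B : Type) (f : A -> B) := forall b, exists a, f a = b.
Definition injective (A B : Type) (f : A -> B) := forall a a', f a = f a' -> a = a'.

Definition compact (X : space) (C : X -> Prop) : Prop :=
  forall F : (X -> Prop) -> Prop,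
    (forall A, F A -> is_open A) ->
    (forall x, C x -> exists A, F A /\ A x) ->
    exists l : list (X -> Prop), Forall F l /\ (forall x, C x -> Exists (fun A => A x) l).

Definition proper_map (A B : space) (f : A -> B) : Prop :=
  continuous f /\ forall C : B -> Prop, compact C -> compact (fun a => C (f a)).

Definition homeo_onto (A B : space) (f : A -> B) (P : B -> Prop) : Prop :=
  continuous f /\ injective f /\ (forall b, P b <-> exists a, f a = b) /\
  (forall U : A -> Prop, is_open U ->
     exists W : B -> Prop, is_open W /\ forall a, U a <-> W (f a)).

Definition gen_open (T : Type) (B : (T -> Prop) -> Prop) (A : T -> Prop) : Prop :=
  forall x, A x -> exists l : list (T -> Prop),
    Forall B l /\ Forall (fun b => b x) l /\
    (forall y, Forall (fun b => b y) l -> A y).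

Lemma gen_open_full T (B : (T -> Prop) -> Prop) : gen_open B (fun _ => True).
Proof. intros x _; exists nil; split; [|split]; auto. Qed.

Lemma gen_open_inter T (B : (T -> Prop) -> Prop) A1 A2 :
  gen_open B A1 -> gen_open B A2 -> gen_open B (fun x => A1 x /\ A2 x).
Proof.
  intros H1 H2 x [a1 a2].
  destruct (H1 x a1) as [l1 [b1 [c1 d1]]]; destruct (H2 x a2) as [l2 [b2 [c2 d2]]].
  exists (l1 ++ l2); split; [|split].
  - apply Forall_app; split; assumption.
  - apply Forall_app; split; assumption.
  - intros z Hz; apply Forall_app in Hz; destruct Hz; auto.
Qed.

Lemma gen_open_union T (B : (T -> Prop) -> Prop) (F : (T -> Prop) -> Prop) :
  (forall A, F A -> gen_open B A) -> gen_open B (fun x => exists A, F A /\ A x).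
Proof.
  intros HF x [A [FA Ax]]. destruct (HF A FA x Ax) as [l [b [c d]]].
  exists l; split; [|split]; auto. intros z Hz; exists A; auto.
Qed.

Definition gen_space (T : Type) (B : (T -> Prop) -> Prop) : space :=
  @Space T (gen_open B) (gen_open_full B) (@gen_open_inter T B) (@gen_open_union T B).

Definition discrete_space (T : Type) : space :=
  @Space T (fun _ => True) I (fun _ _ _ _ => I) (fun _ _ => I).

Definition prod_space (X Y : space) : space :=
  gen_space (fun A : (X * Y)%type -> Prop =>
    (exists U : X -> Prop, is_open U /\ forall p, A p <-> U (fst p)) \/
    (exists V : Y -> Prop, is_open V /\ forall p, A p <-> V (snd p))).

Definition sub_space (X : space) (P : X -> Prop) : space :=
  gen_space (fun A : {x : X | P x} -> Prop =>
    exists U : X -> Prop, is_open U /\ forall p, A p <-> U (proj1_sig p)).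

Definition R_space : space :=
  gen_space (fun A : R -> Prop => exists a b : R, forall y, A y <-> (a < y < b)%R).
Definition I_space : space := sub_space (X := R_space) (fun t : R => (0 <= t <= 1)%R).
Definition i0 : I_space := exist _ 0%R (conj (Rle_refl 0) Rle_0_1).
Definition i1 : I_space := exist _ 1%R (conj Rle_0_1 (Rle_refl 1)).

Definition path_space (X : space) : space :=
  gen_space (fun A : {a : I_space -> X | continuous a} -> Prop =>
    exists (C : I_space -> Prop) (U : X -> Prop),
      compact C /\ is_open U /\
      forall a, A a <-> (forall t, C t -> U (proj1_sig a t))).

Lemma continuous_comp (A B C : space) (f : A -> B) (g : B -> C) :
  continuous f -> continuous g -> continuous (fun x => g (f x)).
Proof. intros hf hg U hU. exact (hf _ (hg U hU)). Qed.

Lemma open_ext (X : space) (A A' : X -> Prop) :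
  (forall x, A x <-> A' x) -> is_open A -> is_open A'.
Proof.
  intros h hA. replace A' with A; auto.
  apply functional_extensionality; intro x; apply propositional_extensionality; auto.
Qed.

Lemma open_nbhd (X : space) (A : X -> Prop) :
  (forall x, A x -> exists U, is_open U /\ U x /\ forall y, U y -> A y) -> is_open A.
Proof.
  intros h.
  apply (@open_ext X (fun x => exists U, (is_open U /\ forall y, U y -> A y) /\ U x)).
  - intro x; split.
    + intros [U [[_ hU] Ux]]; auto.
    + intro Ax; destruct (h x Ax) as [U [oU [Ux hU]]]; eauto.
  - apply open_union; intros U [oU _]; exact oU.
Qed.

Lemma open_list (X : space) (l : list (X -> Prop)) :
  Forall (@is_open X) l -> is_open (fun y => Forall (fun b => b y) l).
Proof.
  induction l as [|b l IH]; intro h.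
  - apply (@open_ext X (fun _ => True)); [intro; split; auto|apply open_full].
  - inversion h; subst.
    apply (@open_ext X (fun y => b y /\ Forall (fun b => b y) l)).
    + intro y; split; [intros [u v]; constructor; auto| intro H; inversion H; auto].
    + apply open_inter; auto.
Qed.

Lemma continuous_gen (X : space) (T : Type) (B : (T -> Prop) -> Prop) (f : X -> T) :
  (forall b, B b -> is_open (fun x => b (f x))) -> @continuous X (gen_space B) f.
Proof.
  intros hB U hU. apply open_nbhd. intros x Ux.
  destruct (hU (f x) Ux) as [l [bl [xl hl]]].
  exists (fun y => Forall (fun b => b y) (map (fun b y => b (f y)) l)).
  split; [|split].
  - apply open_list. apply Forall_map. eapply Forall_impl; [|exact bl]. auto.
  - apply Forall_map; exact xl.
  - intros y Hy; apply hl; apply Forall_map in Hy; exact Hy.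
Qed.

Lemma gen_open_basic (T : Type) (B : (T -> Prop) -> Prop) b : B b -> gen_open B b.
Proof.
  intros hb x bx; exists (b :: nil); split; [|split]; auto.
  intros z Hz; inversion Hz; auto.
Qed.

Record group := Group {
  gcar :> Type;
  gmul : gcar -> gcar -> gcar;
  gone : gcar;
  ginv : gcar -> gcar;
  gmulA : forall a b c, gmul a (gmul b c) = gmul (gmul a b) c;
  gmul1l : forall a, gmul gone a = a;
  gmul1r : forall a, gmul a gone = a;
  gmulVl : forall a, gmul (ginv a) a = gone;
  gmulVr : forall a, gmul a (ginv a) = gone }.
Arguments gmul {g} _ _.
Arguments gone {g}.

(* A G-space: a space with an action by homeomorphisms; since G is discrete,
   continuity of G x X -> X amounts to continuity of each x |-> g x.
   The action laws and properness are in [gaction_ok]. *)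
Record gspace (G : group) := GSpace {
  gsp :> space;
  act : G -> gsp -> gsp;
  act_cont : forall g, continuous (act g) }.
Arguments act {G} _ _ _.
Arguments act_cont {G} _ _ _ _.

Definition arr_space (G : group) (X : gspace G) : space :=
  prod_space (discrete_space G) X.

Definition proper_action (G : group) (X : gspace G) : Prop :=
  @proper_map (arr_space X) (prod_space X X) (fun p => (act X (fst p) (snd p), snd p)).

Definition gaction_ok (G : group) (X : gspace G) : Prop :=
  (forall x, act X gone x = x) /\
  (forall g h x, act X (gmul g h) x = act X g (act X h x)) /\
  proper_action X.

(* structure maps of the translation groupoid G ⋉ X; arrow (g,x) : x -> g x *)
Definition src (G : group) (X : gspace G) (a : arr_space X) : X := snd a.
Definition tgt (G : group) (X : gspace G) (a : arr_space X) : X := act X (fst a) (snd a).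
(* composition  b o a  (for a : x -> y, b : y -> z) *)
Definition acomp (G : group) (X : gspace G) (b a : arr_space X) : arr_space X :=
  (gmul (fst b) (fst a), snd a).

Definition pact (G : group) (X : gspace G) (g : G) (a : path_space X) : path_space X :=
  exist _ (fun t => act X g (proj1_sig a t))
          (continuous_comp (proj2_sig a) (act_cont X g)).

Arguments pact {G} X g a.

Lemma pact_cont (G : group) (X : gspace G) (g : G) : continuous (pact X g).
Proof.
  apply continuous_gen. intros b [C [U [cC [oU hb]]]].
  apply gen_open_basic. exists C, (fun x => U (act X g x)).
  split; [exact cC|split; [exact (act_cont X g U oU)|]].
  intro a; simpl; rewrite hb; simpl; tauto.
Qed.

Definition path_gspace (G : group) (X : gspace G) : gspace G :=
  @GSpace G (path_space X) (pact X) (@pact_cont G X).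

(* A map K ⋉ Y -> G ⋉ X given by a homomorphism and an equivariant map;
   on arrows (k,y) |-> (ehom k, emor y). *)
Record emap (K : group) (Y : gspace K) (G : group) (X : gspace G) := EMap {
  ehom : K -> G;
  emor : Y -> X }.
Arguments ehom {K Y G X} _ _.
Arguments emor {K Y G X} _ _.

Definition equivariant K (Y : gspace K) G (X : gspace G) (e : emap Y X) : Prop :=
  (forall a b, ehom e (gmul a b) = gmul (ehom e a) (ehom e b)) /\
  continuous (emor e) /\
  (forall k y, emor e (act Y k y) = act X (ehom e k) (emor e y)).

Definition arrmap K (Y : gspace K) G (X : gspace G) (e : emap Y X)
  (a : arr_space Y) : arr_space X := (ehom e (fst a), emor e (snd a)).

Definition ecomp K (Y : gspace K) G (X : gspace G) H (Z : gspace H)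
  (e2 : emap Y Z) (e1 : emap X Y) : emap X Z :=
  @EMap G X H Z (fun g => ehom e2 (ehom e1 g)) (fun x => emor e2 (emor e1 x)).

Definition ev (G : group) (X : gspace G) (i : I_space) : emap (path_gspace X) X :=
  @EMap G (path_gspace X) G X (fun g => g) (fun a => proj1_sig a i).

Definition nat_trans K (Y : gspace K) G (X : gspace G) (phi psi : emap Y X) : Prop :=
  exists T : Y -> arr_space X,
    @continuous Y (arr_space X) T /\
    (forall y, src (T y) = emor phi y /\ tgt (T y) = emor psi y) /\
    (forall k y, acomp (T (act Y k y)) (arrmap phi (k, y)) =
                 acomp (arrmap psi (k, y)) (T y)).

Definition ess_equiv K (Y : gspace K) G (X : gspace G) (eps : emap Y X) : Prop :=
  (* (i) G_1 x^t_{G_0} K_0 -> G_0, (g,k) |-> s(g), is an open surjection *)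
  (let P := @sub_space (prod_space (arr_space X) Y)
                       (fun p => tgt (fst p) = emor eps (snd p)) in
   let m := fun p : P => src (fst (proj1_sig p)) in
   @open_map P X m /\ surjective m) /\
  (* (ii) K_1 is the pullback of (s,t) : G_1 -> G_0 x G_0 along eps x eps *)
  @homeo_onto (arr_space Y) (prod_space (arr_space X) (prod_space Y Y))
    (fun a => (arrmap eps a, (src a, tgt a)))
    (fun q => src (fst q) = emor eps (fst (snd q)) /\
              tgt (fst q) = emor eps (snd (snd q))).

Definition gen_map K (Y : gspace K) G (X : gspace G) J (Z : gspace J)
  (eps : emap Z Y) (phi : emap Z X) : Prop :=
  gaction_ok Z /\ equivariant eps /\ equivariant phi /\ ess_equiv eps.

Definition two_iso K (Y : gspace K) G (X : gspace G) J (Z : gspace J) J' (Z' : gspace J')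
  (eps : emap Z Y) (phi : emap Z X) (eps' : emap Z' Y) (phi' : emap Z' X) : Prop :=
  exists (L : group) (W : gspace L) (u : emap W Z) (v : emap W Z'),
    gaction_ok W /\ equivariant u /\ equivariant v /\ ess_equiv u /\ ess_equiv v /\
    nat_trans (ecomp eps u) (ecomp eps' v) /\
    nat_trans (ecomp phi u) (ecomp phi' v).

Definition homotopic K (Y : gspace K) G (X : gspace G) J (Z : gspace J) J' (Z' : gspace J')
  (sigma : emap Z Y) (f : emap Z X) (tau : emap Z' Y) (g : emap Z' X) : Prop :=
  exists (Kt : group) (Yt : gspace Kt) (eps : emap Yt Y) (H : emap Yt (path_gspace X)),
    gen_map eps H /\
    two_iso sigma f eps (ecomp (ev X i0) H) /\
    two_iso tau g eps (ecomp (ev X i1) H).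

(* Main.v *)
Require Import Defs.
From Stdlib Require Import Classical ProofIrrelevance.

Lemma open_const (X : space) (P : Prop) : is_open (fun _ : X => P).
Proof.
  apply (@open_ext X (fun x => exists A : X -> Prop, (P /\ A = fun _ => True) /\ A x)).
  - intro x; split.
    + intros [A [[p _] _]]; exact p.
    + intro p; exists (fun _ => True); auto.
  - apply open_union. intros A [p ->]. apply open_full.
Qed.

Definition cpath (G : group) (X : gspace G) (x : X) : path_space X :=
  exist (fun a : I_space -> X => continuous a) (fun _ : I_space => x) (fun U _ => open_const I_space (U x)).

Lemma cpath_cont (G : group) (X : gspace G) (Y : space) (h : Y -> X) :
  continuous h -> @continuous Y (path_space X) (fun y => @cpath _ X (h y)).
Proof.
  intro hc. apply continuous_gen. intros b [C [U [cC [oU hb]]]].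
  apply open_nbhd. intros y by_. simpl in by_.
  destruct (classic (exists t, C t)) as [[t Ct]|nC].
  - exists (fun z => U (h z)). split; [exact (hc U oU)|]. split.
    + exact (proj1 (hb _) by_ t Ct).
    + intros z Uz. apply (proj2 (hb _)). intros; exact Uz.
  - exists (fun _ => True). split; [apply open_full|]. split; auto.
    intros z _. apply (proj2 (hb _)). intros t Ct; exfalso; eauto.
Qed.

Lemma id_nat K (Y : gspace K) G (X : gspace G) (phi : emap Y X) :
  gaction_ok X -> equivariant phi -> nat_trans phi phi.
Proof.
  intros [h1 _] [hh [hc _]].
  exists (fun y => (gone, emor phi y)). split; [|split].
  - apply continuous_gen. intros b [[U [_ hb]]|[V [oV hb]]].
    + apply (@open_ext Y (fun _ => U gone)); [intro y; rewrite hb; simpl; tauto|].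
      apply open_const.
    + apply (@open_ext Y (fun y => V (emor phi y))); [intro y; rewrite hb; simpl; tauto|].
      exact (hc V oV).
  - intro y; unfold src, tgt; simpl; split; auto.
  - intros k y; unfold acomp, arrmap; simpl. rewrite gmul1l, gmul1r. reflexivity.
Qed.

Lemma ecomp_eq K (Y : gspace K) G (X : gspace G) (a b c : emap Y X) :
  ehom a = ehom b -> emor a = emor b -> (nat_trans a c -> nat_trans b c) /\
  (nat_trans c a -> nat_trans c b).
Proof. destruct a, b; simpl; intros -> ->; auto. Qed.

Lemma equiv_comp K (Y : gspace K) G (X : gspace G) H (Z : gspace H)
  (e2 : emap X Z) (e1 : emap Y X) :
  equivariant e2 -> equivariant e1 -> equivariant (ecomp e2 e1).
Proof.
  intros [a2 [c2 q2]] [a1 [c1 q1]]. split; [|split]; simpl.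
  - intros; rewrite a1, a2; auto.
  - exact (continuous_comp c1 c2).
  - intros; rewrite q1, q2; auto.
Qed.

Theorem mainTheorem10
  (K : group) (Y : gspace K) (G : group) (X : gspace G)
  (K' : group) (Y' : gspace K') (sigma : emap Y' Y) (f : emap Y' X)
  (K'' : group) (Y'' : gspace K'') (tau : emap Y'' Y) (g : emap Y'' X) :
  gaction_ok Y -> gaction_ok X ->
  gen_map sigma f -> gen_map tau g ->
  two_iso sigma f tau g ->
  homotopic sigma f tau g.
Proof.
  intros hY hX _ [ok'' [etau [eg ess]]] Hiso.
  destruct g as [gh gm].
  pose (H := @EMap K'' Y'' G (path_gspace X) gh (fun y => @cpath _ X (gm y))).
  exists K'', Y'', tau, H. split; [|split].
  - split; [exact ok''|split; [exact etau|split; [|exact ess]]].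
    destruct eg as [a [c q]]. split; [exact a|split].
    + exact (@cpath_cont _ X Y'' gm c).
    + intros k y. simpl in *. unfold cpath, pact. simpl.
      apply eq_exist_uncurried. exists (f_equal (fun x => fun _ : I_space => x) (q k y)).
      apply proof_irrelevance.
  - exact Hiso.
  - destruct Hiso as [L [W [u [v [okW [eu [ev [essu [essv _]]]]]]]]].
    exists L, W, v, v.
    split; [exact okW|split; [exact ev|split; [exact ev|split; [exact essv|split; [exact essv|]]]]].
    split.
    + apply id_nat; [exact hY|]. apply equiv_comp; assumption.
    + apply id_nat; [exact hX|]. apply equiv_comp; [exact eg|exact ev].
Qed.
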